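(* For $k\ge2$, positive integers $a_1,\ldots,a_k$ and $j\ge1$, \[\bigl|Q_j^{a_1,\ldots,a_k}\bigr|=\sum_{\substack{(l_2,\ldots,l_k):\ l_c\in[0,a_c]\\ l_2+\cdots+l_k=j-a_1}}\ \prod_{c=2}^k\binom{a_c}{l_c}\,P\!\Bigl(a_1+\sum_{i=2}^{c-1}l_i,\ a_c-l_c\Bigr),\] where $P(m,l)=\binom{m}{l}\,l!$ (which is $0$ if $l>m$).
   Context: For positive integers $a_1,\ldots,a_k$ with $N=\sum a_m$, let $A_i=a_1+\cdots+a_i$ ($A_0=0$) and $I_i=\{A_{i-1}+1,\ldots,A_i\}$. $Q_j^{a_1,\ldots,a_k}$ is the set of all partitions of $[N]$ into exactly $j$ nonempty blocks such that no block contains two distinct elements of the same segment $I_i$. *)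

(* Defs.v *)
From mathcomp Require Import all_boot.
Set Implicit Arguments. Unset Strict Implicit. Unset Printing Implicit Defensive.

(* The sequence a = [:: a_1; ...; a_k] (0-based in Rocq: a_{i+1} = nth 0 a i).
   [N] = {1..N} is represented by 'I_N = {0..N-1}; the segment I_{i+1}
   is {A_i, ..., A_{i+1}-1} (0-based), where A_i = a_1 + ... + a_i. *)
Definition seg_start (a : seq nat) (i : nat) : nat := sumn (take i a).

Definition same_seg (a : seq nat) (x y : nat) : bool :=
  [exists i : 'I_(size a),
     (seg_start a i <= x < seg_start a i.+1) &&
     (seg_start a i <= y < seg_start a i.+1)].

Definition Qset (a : seq nat) (j : nat) : {set {set {set 'I_(sumn a)}}} :=
  [set P : {set {set 'I_(sumn a)}} |
     [&& partition P [set: 'I_(sumn a)], #|P| == j &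
         [forall B in P, forall x in B, forall y in B,
            (x != y) ==> ~~ same_seg a x y]]].

Definition Pn (m l : nat) : nat := 'C(m, l) * l`!.

(* Main.v *)
Require Import Defs.
From mathcomp Require Import all_boot.
From mathcomp Require Import zify.
Set Implicit Arguments. Unset Strict Implicit. Unset Printing Implicit Defensive.

Section PartA.
Variables (T : finType) (L : eqType) (lab : T -> L).

Definition okp (P : {set {set T}}) :=
  [forall B in P, forall x in B, forall y in B, (x != y) ==> (lab x != lab y)].

Definition QS (D : {set T}) (j : nat) : {set {set {set T}}} :=
  [set P : {set {set T}} | [&& partition P D, #|P| == j & okp P]].

Lemma okpP (P : {set {set T}}) : reflect (forall B, B \in P -> forall x y, x \in B -> y \in B -> x != y -> lab x != lab y) (okp P).
Proof.
apply: (iffP forallP) => [H B BP x y xB yB nxy|H B].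
  by have /implyP/(_ BP)/forallP/(_ x)/implyP/(_ xB)/forallP/(_ y)/implyP/(_ yB)/implyP := H B; apply.
apply/implyP=> BP; apply/forallP=> x; apply/implyP=> xB; apply/forallP=> y; apply/implyP=> yB.
by apply/implyP => nxy; apply: H BP x y xB yB nxy.
Qed.

Definition rem (x : T) (P : {set {set T}}) :=
  let B0 := pblock P x in
  if B0 :\ x == set0 then P :\ B0 else (B0 :\ x) |: (P :\ B0).

Section Fix.
Variables (x : T) (D : {set T}).
Hypothesis xD : x \notin D.

Lemma pbx P : partition P (x |: D) -> pblock P x \in P /\ x \in pblock P x.
Proof.
move=> pP; have xc : x \in cover P by rewrite (cover_partition pP) setU11.
by rewrite pblock_mem // mem_pblock.
Qed.

Lemma notin_D1 P B : partition P (x |: D) -> B \in P -> x \in B ->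
  B :\ x != set0 -> B :\ x \notin P :\ B.
Proof.
move=> pP BP xB /set0Pn[y yB]; apply/negP => /setD1P[ne BxP].
have tP := partition_trivIset pP.
have e1 : pblock P y = B :\ x by apply: def_pblock.
have e2 : pblock P y = B by apply: def_pblock => //; move: yB; rewrite inE => /andP[].
by move: ne; rewrite -e1 e2 eqxx.
Qed.

Lemma rem_part P : partition P (x |: D) -> partition (rem x P) D.
Proof.
move=> pP; case: (pbx pP) => B0P xB0; rewrite /rem.
set B0 := pblock P x in B0P xB0 *.
have sB := partitionS pP B0P.
have pD := partitionD1 pP B0P.
case: ifP => [/eqP e|/negbT ne].
  suff -> : D = (x |: D) :\: B0 by [].
  apply/setP=> y; rewrite !inE; case: (y =P x) => [->|nyx]; first by rewrite (negPf xD) xB0.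
  have : y \notin B0 :\ x by rewrite e inE.
  by rewrite !inE; move/eqP: nyx => nyx; rewrite nyx /= => /negPf ->.
have -> : D = (B0 :\ x) :|: ((x |: D) :\: B0).
  apply/setP=> y; have := subsetP sB y; rewrite !inE.
  case: (y =P x) => [->|nyx] /=; first by rewrite (negPf xD) xB0.
  by case: (y \in B0) => //= ->.
apply: partitionU1 => //.
rewrite disjoints_subset; apply/subsetP => y; rewrite !inE => /andP[_ ->]; by [].
Qed.

Lemma okp_sub (P P' : {set {set T}}) : okp P -> (forall B' : {set T}, B' \in P' -> exists2 B, B \in P & B' \subset B) -> okp P'.
Proof.
move=> /okpP ok H; apply/okpP => B' B'P y z yB zB nyz.
case: (H B' B'P) => B BP /subsetP s; exact: ok _ BP _ _ (s _ yB) (s _ zB) nyz.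
Qed.

Lemma rem_okp P : partition P (x |: D) -> okp P -> okp (rem x P).
Proof.
move=> pP ok; apply: (okp_sub ok) => B'; rewrite /rem.
case: ifP => _; first by move=> /setD1P[_ h]; exists B'.
case/setU1P => [->|/setD1P[_ h]]; last by exists B'.
by exists (pblock P x); [case: (pbx pP)| apply: subD1set].
Qed.

Lemma rem_card P : partition P (x |: D) ->
  #|rem x P| = if pblock P x :\ x == set0 then #|P|.-1 else #|P|.
Proof.
move=> pP; case: (pbx pP) => B0P xB0; rewrite /rem.
rewrite (cardsD1 (pblock P x) P) B0P.
case: ifP => [_|/negbT ne] //.
by rewrite cardsU1 (notin_D1 pP B0P xB0 ne).
Qed.


Lemma set1_neq0 (y : T) : [set y] != set0.
Proof. by apply/set0Pn; exists y; rewrite set11. Qed.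

Lemma notin_cover P' : partition P' D -> forall B, B \in P' -> x \notin B.
Proof.
move=> pP B BP; apply/negP=> xB; have := subsetP (partitionS pP BP) x xB.
by rewrite (negPf xD).
Qed.

Lemma add1_part P' : partition P' D -> partition ([set x] |: P') (x |: D).
Proof. by move=> pP; apply: partitionU1 => //; [exact: set1_neq0| rewrite disjoints1]. Qed.

Lemma add1_pb P' : partition P' D -> pblock ([set x] |: P') x = [set x].
Proof. by move=> pP; apply: def_pblock; [exact: partition_trivIset (add1_part pP)|exact: setU11|exact: set11]. Qed.

Lemma add1_notin P' : partition P' D -> [set x] \notin P'.
Proof. by move=> pP; apply/negP=> h; have := notin_cover pP h; rewrite set11. Qed.

Lemma add1_rem P' : partition P' D -> rem x ([set x] |: P') = P'.
Proof.
move=> pP; rewrite /rem add1_pb // setDv eqxx setU1K //; exact: add1_notin.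
Qed.

Lemma fiber1 j P' : P' \in QS D j ->
  #|[set P in QS (x |: D) j.+1 | rem x P == P']| = 1.
Proof.
rewrite inE => /and3P[pP' /eqP cP' okP'].
rewrite (_ : [set _ in _ | _] = [set [set x] |: P']) ?cards1 //.
apply/setP => P; rewrite !inE; apply/idP/eqP.
  case/andP => /and3P[pP /eqP cP okP] /eqP rP.
  have := rem_card pP; rewrite rP cP' cP.
  case: ifP => [/eqP e _|_ /eqP]; last by rewrite ltn_eqF.
  case: (pbx pP) => B0P xB0.
  have eB : pblock P x = [set x].
    apply/setP => y; rewrite inE; apply/idP/eqP => [yB|->//].
    apply/eqP; apply: contraT => nyx.
    have : y \in pblock P x :\ x by apply/setD1P; split.
    by rewrite e inE.
  move: rP; rewrite /rem e eqxx => <-.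
  by rewrite -eB setD1K.
move=> ->; rewrite add1_part // cardsU1 add1_notin // cP' add1_rem // eqxx /= andbT.
rewrite add1n eqxx /=. apply/okpP => B /setU1P[->|BP] y z; first by rewrite !inE => /eqP-> /eqP->; rewrite eqxx.
by move/okpP: okP'; apply.
Qed.

Definition avail (P' : {set {set T}}) := [set B in P' | [forall y in B, lab y != lab x]].
Definition ins (P' : {set {set T}}) B := (x |: B) |: (P' :\ B).

Lemma xUB_notin P' B : partition P' D -> x |: B \notin P' :\ B.
Proof.
move=> pP; apply/negP => /setD1P[_ h]; have := notin_cover pP h.
by rewrite setU11.
Qed.

Lemma ins_part P' B : partition P' D -> B \in P' -> partition (ins P' B) (x |: D).
Proof.
move=> pP BP; have pD := partitionD1 pP BP.
have sB := partitionS pP BP.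
have -> : x |: D = (x |: B) :|: (D :\: B).
  apply/setP => y; have := subsetP sB y; rewrite !inE.
  by case: (y == x); case: (y \in B); case: (y \in D) => //= ->.
apply: partitionU1 => //; first by apply/set0Pn; exists x; rewrite setU11.
rewrite disjoints_subset; apply/subsetP => y; rewrite !inE.
case/orP => [/eqP->|->]; last by [].
by rewrite (negPf xD) andbF.
Qed.

Lemma ins_pb P' B : partition P' D -> B \in P' -> pblock (ins P' B) x = x |: B.
Proof.
move=> pP BP; apply: def_pblock; [exact: partition_trivIset (ins_part pP BP)|exact: setU11|exact: setU11].
Qed.

Lemma ins_rem P' B : partition P' D -> B \in P' -> rem x (ins P' B) = P'.
Proof.
move=> pP BP; rewrite /rem ins_pb // setU1K ?(notin_cover pP BP) //.
rewrite (negPf (partition_neq0 pP BP)) /ins setU1K ?xUB_notin //.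
by rewrite setD1K.
Qed.

Lemma ins_card P' B : partition P' D -> B \in P' -> #|ins P' B| = #|P'|.
Proof.
by move=> pP BP; rewrite cardsU1 xUB_notin // (cardsD1 B P') BP.
Qed.

Lemma ins_okp P' B : okp P' -> B \in avail P' -> okp (ins P' B).
Proof.
move=> okP; rewrite inE => /andP[BP /forallP av].
apply/okpP => C /setU1P[->|/setD1P[_ CP]] y z; last by move/okpP: okP; apply.
have avB u : u \in B -> lab u != lab x by move=> uB; have /implyP := av u; apply.
rewrite !inE => /orP[/eqP->|yB] /orP[/eqP->|zB]; rewrite ?eqxx //.
- by move=> _; rewrite eq_sym avB.
- by move=> _; rewrite avB.
by move/okpP: okP => ok; apply: ok BP _ _ yB zB.
Qed.

Lemma fiber2 k P' : P' \in QS D k.+1 ->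
  #|[set P in QS (x |: D) k.+1 | rem x P == P']| = #|avail P'|.
Proof.
rewrite inE => /and3P[pP' /eqP cP' okP'].
rewrite (_ : [set _ in _ | _] = ins P' @: avail P').
  apply: card_in_imset => B1 B2 B1a B2a e.
  have B1P : B1 \in P' by move: B1a; rewrite inE => /andP[].
  have B2P : B2 \in P' by move: B2a; rewrite inE => /andP[].
  have := ins_pb pP' B1P; rewrite e ins_pb // => e2.
  by rewrite -(setU1K (notin_cover pP' B1P)) -e2 setU1K // (notin_cover pP' B2P).
apply/setP => P; rewrite !inE; apply/idP/imsetP.
  case/andP => /and3P[pP /eqP cP okP] /eqP rP.
  have := rem_card pP; rewrite rP cP' cP.
  case: ifP => [_ /eqP|/negbT ne _]; first by rewrite eq_sym ltn_eqF.
  case: (pbx pP) => B0P xB0.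
  exists (pblock P x :\ x).
    rewrite inE -rP /rem (negPf ne) setU11 /=.
    apply/forallP => y; apply/implyP => /setD1P[nyx yB].
    by move/okpP: okP => /(_ _ B0P y x yB xB0 nyx).
  rewrite /ins setD1K // -rP /rem (negPf ne) setU1K; last exact: notin_D1 pP B0P xB0 ne.
  by rewrite setD1K.
case=> B Ba ->; have BP : B \in P' by move: Ba; rewrite inE => /andP[].
by rewrite ins_part // ins_card // cP' eqxx ins_okp //= ins_rem.
Qed.

Lemma avail_card P' : partition P' D -> okp P' ->
  #|avail P'| = #|P'| - #|[set y in D | lab y == lab x]|.
Proof.
move=> pP okP; set Dx := [set y in D | lab y == lab x].
have tP := partition_trivIset pP.
have cD := cover_partition pP.
have -> : avail P' = P' :\: (pblock P' @: Dx).
  apply/setP => B; rewrite !inE; case BP: (B \in P') => //=; rewrite ?andbF // andbT.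
  apply/forallP/negP => [av /imsetP[y yD eB]|nim y].
    have yB : y \in B by rewrite eB mem_pblock cD; move: yD; rewrite inE => /andP[].
    have := av y; rewrite yB /=; move: yD; rewrite inE => /andP[_ ->] //.
  apply/implyP => yB; apply/negP => e; apply: nim; apply/imsetP; exists y.
    by rewrite inE e (subsetP (partitionS pP BP)).
  by rewrite (def_pblock tP BP yB).
rewrite cardsD (setIidPr _).
  rewrite card_in_imset // => y1 y2 y1D y2D e.
  have y1c : y1 \in cover P' by rewrite cD; move: y1D; rewrite inE => /andP[].
  have y2c : y2 \in cover P' by rewrite cD; move: y2D; rewrite inE => /andP[].
  have y1B : y1 \in pblock P' y2 by rewrite -e mem_pblock.
  have y2B : y2 \in pblock P' y2 by rewrite mem_pblock.
  apply/eqP; apply: contraT => ne.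
  move/okpP: okP => /(_ _ (pblock_mem y2c) _ _ y1B y2B ne).
  move: y1D y2D; rewrite !inE => /andP[_ /eqP->] /andP[_ /eqP->].
  by rewrite eqxx.
apply/subsetP => _ /imsetP[y yD ->]; apply: pblock_mem; rewrite cD.
by move: yD; rewrite inE => /andP[].
Qed.

Lemma recA j : #|QS (x |: D) j.+1| =
  #|QS D j| + (j.+1 - #|[set y in D | lab y == lab x]|) * #|QS D j.+1|.
Proof.
rewrite -sum1_card.
rewrite (partition_big (rem x) [predU (mem (QS D j)) & (mem (QS D j.+1))]).
  rewrite bigU /=; last first.
    rewrite disjoints_subset; apply/subsetP => P; rewrite !inE => /and3P[_ /eqP-> _].
    by apply/negP => /and3P[_ /eqP /n_Sn].
  congr (_ + _).
    rewrite -[RHS]sum1_card; apply: eq_bigr => P' P'Q.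
    rewrite [RHS](esym (fiber1 P'Q)) -[RHS]sum1_card; apply: eq_bigl => P; by rewrite !inE.
  rewrite mulnC -sum_nat_const; apply: eq_bigr => P' P'Q.
  have := P'Q; rewrite inE => /and3P[pP /eqP cP okP].
  rewrite -[in RHS]cP -avail_card // [RHS](esym (fiber2 P'Q)) -[RHS]sum1_card; apply: eq_bigl => P; by rewrite !inE.
move=> P; rewrite inE => /and3P[pP /eqP cP okP]; rewrite !inE.
rewrite rem_part // rem_okp // rem_card // cP /=.
by case: ifP => _; rewrite eqxx ?orbT.
Qed.

Lemma QS0 : #|QS (x |: D) 0| = 0.
Proof.
apply/eqP; rewrite cards_eq0; apply/eqP/setP => P; rewrite !inE.
apply/negP => /and3P[pP /eqP /cards0_eq P0 _].
by move: (cover_partition pP); rewrite P0 /cover big_set0 => /setP/(_ x); rewrite !inE eqxx.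
Qed.

End Fix.
End PartA.

Lemma QS_set0 (T : finType) (L : eqType) (lab : T -> L) j : #|QS lab set0 j| = (j == 0).
Proof.
case: j => [|j].
  rewrite (_ : QS lab set0 0 = [set set0]) ?cards1 //.
  apply/setP => P; rewrite !inE partition_set0; apply/idP/eqP => [/and3P[/eqP//]|->].
  by rewrite eqxx cards0 eqxx /okp; apply/forallP => B; rewrite inE.
apply/eqP; rewrite cards_eq0; apply/eqP/setP => P; rewrite !inE partition_set0.
by apply/negP => /and3P[/eqP-> ]; rewrite cards0.
Qed.

Lemma PnS m t : Pn m t.+1 = Pn m t * (m - t).
Proof. by rewrite /Pn !bin_ffact ffactnSr. Qed.

Lemma Pn0 m : Pn m 0 = 1.
Proof. by rewrite /Pn bin0. Qed.

Lemma Pn0S t : Pn 0 t.+1 = 0.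
Proof. by rewrite /Pn bin0n. Qed.

Lemma arith (c : nat -> nat) n j :
  \sum_(0 <= l < j.+2) 'C(n.+1, l) * Pn (j.+1 - l) (n.+1 - l) * c (j.+1 - l)
  = \sum_(0 <= l < j.+1) 'C(n, l) * Pn (j - l) (n - l) * c (j - l) +
    (j.+1 - n) * \sum_(0 <= l < j.+2) 'C(n, l) * Pn (j.+1 - l) (n - l) * c (j.+1 - l).
Proof.
rewrite big_nat_recl // [X in (j.+1 - n) * X]big_nat_recl //= !subn0 !bin0.
rewrite (eq_bigr (fun l => 'C(n, l.+1) * Pn (j - l) (n - l) * c (j - l) +
                         'C(n, l) * Pn (j - l) (n - l) * c (j - l))); last first.
  by move=> l _; rewrite !subSS binS !mulnDl.
rewrite big_split /= mulnDr [RHS]addnC addnA; congr (_ + _).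
rewrite big_distrr /= PnS; congr (_ + _); first by rewrite !mul1n [Pn _ _ * (_ - _)]mulnC mulnA.
apply: eq_bigr => l _; rewrite subSS.
case: (ltnP n l.+1) => h; first by rewrite bin_small // !mul0n muln0.
have -> : n - l = (n - l.+1).+1 by lia.
rewrite PnS (_ : j - l - (n - l.+1) = j.+1 - n); last by lia.
lia.
Qed.

Lemma seg_rec (T : finType) (L : eqType) (lab : T -> L) (D : {set T}) (s : L) :
  (forall y, y \in D -> lab y != s) ->
  forall n (S : {set T}), #|S| = n -> (forall y, y \in S -> lab y = s) ->
  forall j, #|QS lab (D :|: S) j| =
    \sum_(0 <= l < j.+1) 'C(n, l) * Pn (j - l) (n - l) * #|QS lab D (j - l)|.
Proof.
move=> hD; elim=> [|n IH] S cS hS j.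
  move/cards0_eq: cS => ->; rewrite setU0 big_nat_recl // subn0 bin0 Pn0 !mul1n.
  by rewrite big1 ?addn0 // => i _; rewrite bin0n.
have [x xS] : exists x, x \in S by apply/set0Pn; rewrite -cards_eq0 cS.
set S' := S :\ x.
have cS' : #|S'| = n by move: cS; rewrite (cardsD1 x S) xS add1n => -[].
have eU : D :|: S = x |: (D :|: S') by rewrite -(setD1K xS) setUCA.
have hS' : forall y, y \in S' -> lab y = s by move=> y /setD1P[_ /hS].
have xn : x \notin D :|: S'.
  rewrite in_setU negb_or setD11 andbT; apply/negP => /hD; by rewrite (hS x xS) eqxx.
have eDx : [set y in D :|: S' | lab y == lab x] = S'.
  apply/setP => y; rewrite !inE (hS x xS).
  apply/idP/idP => [/andP[/orP[yD|//] ys]|h].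
    by move: (hD y yD); rewrite ys.
  by rewrite h orbT /=; move/andP: h => [_ /hS ->].
case: j => [|j].
  rewrite eU QS0 // big_nat1 sub0n subn0 Pn0S.
  by rewrite muln0 mul0n.
rewrite eU recA // eDx cS' !IH //.
by move: (arith (fun m => #|QS lab D m|) n j) => /= ->.
Qed.

Section PartC.
Variable a : seq nat.

Lemma sumn_take_le i : seg_start a i <= sumn a.
Proof. by rewrite /seg_start -{2}(cat_take_drop i a) sumn_cat leq_addr. Qed.

Lemma seg_mono i i' : i <= i' -> seg_start a i <= seg_start a i'.
Proof.
move=> h; rewrite /seg_start -(take_takel a h).
by rewrite -{2}(cat_take_drop i (take i' a)) sumn_cat leq_addr.
Qed.

Lemma seg_startS i : i < size a -> seg_start a i.+1 = seg_start a i + nth 0 a i.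
Proof. by move=> h; rewrite /seg_start (take_nth 0 h) -cats1 sumn_cat /= addn0. Qed.

Lemma seg_start0 : seg_start a 0 = 0.
Proof. by rewrite /seg_start take0. Qed.

Lemma seg_start_size : seg_start a (size a) = sumn a.
Proof. by rewrite /seg_start take_size. Qed.

Definition segP i (x : nat) := seg_start a i <= x < seg_start a i.+1.

Lemma seg_uniq i i' x : segP i x -> segP i' x -> i = i'.
Proof.
rewrite /segP => /andP[h1 h2] /andP[h3 h4].
case: (ltngtP i i') => // h.
  by have := seg_mono h; lia.
by have := seg_mono h; lia.
Qed.

Lemma seg_exists x : x < sumn a -> exists i : 'I_(size a), segP i x.
Proof.
move=> hx.
have ex : exists k, x < seg_start a k by exists (size a); rewrite seg_start_size.
case: (ex_minnP ex) => m Pm minm.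
case: m Pm minm => [|i] Pm minm; first by rewrite seg_start0 in Pm.
have hi : i < size a.
  rewrite ltnNge; apply/negP => h.
  have := minm (size a); rewrite seg_start_size => /(_ hx); lia.
exists (Ordinal hi); rewrite /segP /= Pm andbT leqNgt; apply/negP => /minm; lia.
Qed.

Definition lab (x : 'I_(sumn a)) : option 'I_(size a) :=
  [pick i : 'I_(size a) | segP i x].

Lemma labE (x : 'I_(sumn a)) i : (lab x == Some i) = segP i x.
Proof.
rewrite /lab; case: pickP => [i' h|h] /=; last by rewrite h.
apply/eqP/idP => [[<-]//|hi]; congr Some; apply: val_inj; exact: seg_uniq h hi.
Qed.

Lemma lab_some (x : 'I_(sumn a)) : exists i, lab x = Some i /\ segP i x.
Proof.
case: (seg_exists (ltn_ord x)) => i hi; exists i; split => //.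
by apply/eqP; rewrite labE.
Qed.

Lemma same_segE (x y : 'I_(sumn a)) : same_seg a x y = (lab x == lab y).
Proof.
apply/existsP/eqP => [[i /andP[hx hy]]|e].
  have hx2 : segP i x := hx; have hy2 : segP i y := hy.
  by move: hx2 hy2; rewrite -!labE => /eqP-> /eqP->.
case: (lab_some x) => i [lx hi]; exists i; rewrite /segP in hi; rewrite hi /=.
by rewrite -/(segP i y) -labE -e lx.
Qed.

Lemma QsetE j : Qset a j = QS lab [set: 'I_(sumn a)] j.
Proof.
apply/setP => P; rewrite !inE; congr [&& _, _ & _].
apply: eq_forallb => B; congr (_ ==> _); apply: eq_forallb => x; congr (_ ==> _).
apply: eq_forallb => y; congr (_ ==> _); by rewrite same_segE.
Qed.

Definition Dset i := [set x : 'I_(sumn a) | x < seg_start a i].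
Definition Sset i := [set x : 'I_(sumn a) | segP i x].

Lemma card_lt h : h <= sumn a -> #|[set x : 'I_(sumn a) | x < h]| = h.
Proof.
move=> hN.
have -> : [set x : 'I_(sumn a) | x < h] = [set widen_ord hN y | y in 'I_h].
  apply/setP => x; rewrite inE; apply/idP/imsetP => [xh|[y _ ->]]; last by rewrite /= ltn_ord.
  by exists (Ordinal xh) => //; apply: val_inj.
rewrite card_imset ?card_ord // => y1 y2 /(congr1 val) /= e; exact: val_inj.
Qed.

Lemma DsetS i : Dset i.+1 = Dset i :|: Sset i.
Proof.
apply/setP => x; rewrite !inE /segP.
have := seg_mono (leqnSn i); case: (ltnP x (seg_start a i)) => /=; lia.
Qed.

Lemma card_Sset i : i < size a -> #|Sset i| = nth 0 a i.
Proof.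
move=> hi; have := cardsU (Dset i) (Sset i); rewrite -DsetS.
have -> : Dset i :&: Sset i = set0.
  apply/setP => x; rewrite !inE /segP; by case: (ltnP x (seg_start a i)) => h //=; rewrite leqNgt h.
rewrite cards0 subn0 /Dset !card_lt ?sumn_take_le // seg_startS //; lia.
Qed.

Lemma Dset0 : Dset 0 = set0.
Proof. by apply/setP => x; rewrite !inE seg_start0. Qed.

Lemma Dset_size : Dset (size a) = [set: 'I_(sumn a)].
Proof. by apply/setP => x; rewrite !inE seg_start_size ltn_ord. Qed.

Definition cnt i j := #|QS lab (Dset i) j|.

Lemma cnt0 j : cnt 0 j = (j == 0).
Proof. by rewrite /cnt Dset0 QS_set0. Qed.

Lemma cntS i j : i < size a ->
  cnt i.+1 j = \sum_(0 <= l < j.+1) 'C(nth 0 a i, l) * Pn (j - l) (nth 0 a i - l) * cnt i (j - l).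
Proof.
move=> hi; rewrite /cnt DsetS (@seg_rec _ _ lab (Dset i) (Some (Ordinal hi)) _ (nth 0 a i) (Sset i)) //.
- move=> y; rewrite inE labE /segP /=; lia.
- exact: card_Sset.
by move=> y; rewrite inE => h; apply/eqP; rewrite labE.
Qed.

End PartC.

Definition FormF (N a1 n : nat) (b : nat -> nat) (j : nat) : nat :=
  \sum_(l : {ffun 'I_n -> 'I_N.+1} |
          [forall c, l c <= b c] && (\sum_(c : 'I_n) (l c : nat) + a1 == j))
     \prod_(c : 'I_n) ('C(b c, l c) * Pn (a1 + \sum_(i : 'I_n | i < c) (l i : nat)) (b c - l c)).

Lemma FormF0 N a1 b j : FormF N a1 0 b j = (a1 == j).
Proof.
rewrite /FormF big_mkcond (big_pred1 [ffun i : 'I_0 => ord0 : 'I_N.+1]).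
  rewrite big_ord0 big_ord0 add0n.
  have -> : [forall c, [ffun i : 'I_0 => ord0 : 'I_N.+1] c <= b c] by apply/forallP => -[].
  by case: (a1 == j).
by move=> f; apply/esym/eqP/ffunP => -[].
Qed.

Section Step.
Variables (N n : nat).
Local Notation X := 'I_N.+1.

Definition hh (p : X * {ffun 'I_n -> X}) : {ffun 'I_n.+1 -> X} :=
  [ffun i => if unlift ord_max i is Some i' then p.2 i' else p.1].
Definition hh' (f : {ffun 'I_n.+1 -> X}) : X * {ffun 'I_n -> X} :=
  (f ord_max, [ffun i => f (lift ord_max i)]).

Lemma hh_max p : hh p ord_max = p.1.
Proof. by rewrite ffunE unlift_none. Qed.

Lemma hh_lift p i : hh p (lift ord_max i) = p.2 i.
Proof. by rewrite ffunE liftK. Qed.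

Lemma hh_bij : bijective hh.
Proof.
exists hh' => [[x g]|f].
  by rewrite /hh' hh_max /=; congr pair; apply/ffunP => i; rewrite ffunE hh_lift.
apply/ffunP => i; rewrite ffunE; case: unliftP => [i' ->|->] /=; last by [].
by rewrite ffunE.
Qed.

Lemma widen_lift (i : 'I_n) : widen_ord (leqnSn n) i = lift ord_max i.
Proof. by apply: val_inj; rewrite /= /bump (leqNgt n) ltn_ord. Qed.

Lemma sum_lift (F : 'I_n.+1 -> nat) :
  \sum_(c < n.+1) F c = \sum_(c < n) F (lift ord_max c) + F ord_max.
Proof. by rewrite big_ord_recr /=; congr (_ + _); apply: eq_bigr => i _; rewrite widen_lift. Qed.

Lemma prod_lift (F : 'I_n.+1 -> nat) :
  \prod_(c < n.+1) F c = \prod_(c < n) F (lift ord_max c) * F ord_max.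
Proof. by rewrite big_ord_recr /=; congr (_ * _); apply: eq_bigr => i _; rewrite widen_lift. Qed.

Lemma sum_lift_lt (F : 'I_n.+1 -> nat) (c : 'I_n.+1) :
  \sum_(i < n.+1 | i < c) F i = \sum_(i < n | i < c) F (lift ord_max i) + (if n < c then F ord_max else 0).
Proof.
rewrite big_mkcond sum_lift /= [in RHS]big_mkcond /=; congr (_ + _).
by apply: eq_bigr => i _; rewrite /bump (leqNgt n) ltn_ord add0n.
Qed.

Lemma forall_lift (b : nat -> nat) (f : {ffun 'I_n.+1 -> X}) :
  [forall c, f c <= b c] = (f ord_max <= b n) && [forall c : 'I_n, f (lift ord_max c) <= b c].
Proof.
apply/forallP/andP => [H|[H1 /forallP H2] c].
  split; first exact: H ord_max.
  apply/forallP => c; have := H (lift ord_max c); by rewrite /= /bump (leqNgt n) ltn_ord add0n.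
case: (unliftP ord_max c) => [c' ->|->] //.
by have := H2 c'; rewrite /= /bump (leqNgt n) ltn_ord add0n.
Qed.

Lemma forall_hh (b : nat -> nat) x g :
  [forall c, hh (x, g) c <= b c] = (x <= b n) && [forall c : 'I_n, g c <= b c].
Proof.
rewrite forall_lift hh_max; congr (_ && _); apply: eq_forallb => c.
by rewrite hh_lift.
Qed.

Lemma sum_hh x g : \sum_(c < n.+1) (hh (x, g) c : nat) = \sum_(c < n) (g c : nat) + x.
Proof.
by rewrite sum_lift hh_max; congr (_ + _); apply: eq_bigr => c _; rewrite hh_lift.
Qed.

Lemma prod_hh (b : nat -> nat) a1 x g :
  \prod_(c < n.+1) ('C(b c, hh (x, g) c) *
      Pn (a1 + \sum_(i < n.+1 | i < c) (hh (x, g) i : nat)) (b c - hh (x, g) c)) =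
  \prod_(c < n) ('C(b c, g c) * Pn (a1 + \sum_(i < n | i < c) (g i : nat)) (b c - g c)) *
  ('C(b n, x) * Pn (a1 + \sum_(i < n) (g i : nat)) (b n - x)).
Proof.
rewrite prod_lift hh_max sum_lift_lt ltnn addn0; congr (_ * (_ * Pn (_ + _) _)).
  apply: eq_bigr => c _; rewrite hh_lift sum_lift_lt /= /bump (leqNgt n) ltn_ord add0n.
  rewrite ltnNge ltnW //=; rewrite addn0; congr (_ * Pn (_ + _) _).
  by apply: eq_bigr => i _; rewrite hh_lift.
rewrite big_mkcond /=; apply: eq_bigr => i _; by rewrite hh_lift ltn_ord.
Qed.

End Step.

Lemma sum_pair (I J : finType) (G : I * J -> nat) :
  \sum_(p : I * J) G p = \sum_(i : I) \sum_(j : J) G (i, j).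
Proof. by rewrite pair_bigA; apply: eq_bigr => -[]. Qed.

Lemma sum_trunc (N j bn : nat) (T : nat -> nat) : bn <= N -> (forall l, bn < l -> T l = 0) ->
  \sum_(x < N.+1) (if x <= j then T x else 0) = \sum_(0 <= l < j.+1) T l.
Proof.
move=> hb hT.
rewrite -(big_mkord xpredT (fun x => if x <= j then T x else 0)).
rewrite (@big_nat_widen _ _ _ 0 N.+1 (N.+1 + j.+1)) ?leq_addr //.
rewrite [RHS](@big_nat_widen _ _ _ 0 j.+1 (N.+1 + j.+1)) ?leq_addl //.
rewrite big_mkcond [RHS]big_mkcond; apply: eq_bigr => i _ /=.
case: (leqP i j) => hij; last by rewrite [i < j.+1]ltnS (leqNgt i j) hij; case: ifP.
rewrite [i < j.+1]ltnS hij; case: ltnP => // hN; rewrite hT //; lia.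
Qed.

Lemma FormFS N a1 n b j : b n <= N ->
  FormF N a1 n.+1 b j =
  \sum_(0 <= l < j.+1) 'C(b n, l) * Pn (j - l) (b n - l) * FormF N a1 n b (j - l).
Proof.
move=> hb.
rewrite /FormF big_mkcond (reindex (@hh N n)) /=; last exact: onW_bij (hh_bij N n).
rewrite sum_pair.
rewrite -(@sum_trunc N j (b n) (fun l => 'C(b n, l) * Pn (j - l) (b n - l) *
   \sum_(l0 : {ffun 'I_n -> 'I_N.+1} | [forall c, l0 c <= b c] && (\sum_(c < n) (l0 c : nat) + a1 == j - l))
     \prod_(c < n) ('C(b c, l0 c) * Pn (a1 + \sum_(i < n | i < c) (l0 i : nat)) (b c - l0 c)))) //; last first.
  by move=> l hl; rewrite bin_small // !mul0n.
apply: eq_bigr => x _.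
case: (leqP x j) => hxj; last first.
  apply: big1 => g _; rewrite forall_hh sum_hh.
  by rewrite (_ : _ + x + a1 == j = false) ?andbF //; apply/negbTE/eqP; lia.
rewrite big_distrr /= [RHS]big_mkcond; apply: eq_bigr => g _.
rewrite forall_hh sum_hh prod_hh.
case: (leqP x (b n)) => hxb; last first.
  by rewrite /= bin_small // !mul0n; case: ifP.
rewrite /= (_ : (_ + x + a1 == j) = (\sum_(c < n) (g c : nat) + a1 == j - x)); last first.
  apply/eqP/eqP; move: hxj; set S := \sum_(c < n) _; lia.
case: ifP => [/andP[_ /eqP e]|_] //.
move: e; set S := \sum_(c < n) (g c : nat) => e.
rewrite (_ : a1 + S = j - x); last by lia.
lia.
Qed.

Lemma nth_le_sumn (s : seq nat) i : nth 0 s i <= sumn s.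
Proof.
elim: s i => [|x s IH] [|i] //=; first exact: leq_addr.
by apply: leq_trans (IH i) _; apply: leq_addl.
Qed.

Lemma main_cnt (a : seq nat) : forall i, i < size a -> forall j,
  cnt a i.+1 j = FormF (sumn a) (nth 0 a 0) i (fun c => nth 0 a c.+1) j.
Proof.
elim=> [|i IH] hi j.
  rewrite cntS // FormF0 big_nat_recr //= cnt0 subnn eqxx muln1.
  rewrite big_nat_cond big1 ?add0n; last first.
    by move=> l /andP[/andP[_ hl] _]; rewrite cnt0 subn_eq0 leqNgt hl muln0.
  case: (ltngtP (nth 0 a 0) j) => h.
  - by rewrite bin_small.
  - by rewrite (_ : nth 0 a 0 - j = (nth 0 a 0 - j).-1.+1) ?Pn0S ?muln0 //; lia.
  by rewrite h subnn Pn0 binn.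
rewrite cntS // FormFS ?nth_le_sumn //.
by apply: eq_bigr => l _; rewrite IH // ltnW.
Qed.

Lemma main (a : seq nat) (j : nat) : 0 < size a ->
  #|Qset a j| = FormF (sumn a) (nth 0 a 0) (size a).-1 (fun c => nth 0 a c.+1) j.
Proof.
move=> ha; rewrite QsetE -(Dset_size a) -main_cnt ?prednK //; lia.
Qed.

Unset Implicit Arguments.
Theorem mainTheorem3 (a : seq nat) (j : nat) :
  2 <= size a -> all (fun x => 0 < x) a -> 1 <= j ->
  #|Qset a j| =
  \sum_(l : {ffun 'I_(size a).-1 -> 'I_(sumn a).+1} |
          [forall c, l c <= nth 0 a c.+1] &&
          (\sum_(c : 'I_(size a).-1) (l c : nat) + nth 0 a 0 == j))
     \prod_(c : 'I_(size a).-1)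
        ('C(nth 0 a c.+1, l c) *
         Pn (nth 0 a 0 + \sum_(i : 'I_(size a).-1 | i < c) (l i : nat))
            (nth 0 a c.+1 - l c)).
Proof.
move=> h2 _ _; exact: main (ltnW h2).
Qed.
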